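(* Let $\mathbb{E}$ be a finitely complete category, $\Sigma$ a fibrational class of split epimorphisms, and suppose $\mathbb{E}$ is a $\Sigma$-Mal'tsev category. Let $R$ be an equivalence relation and $S$ a $\Sigma$-equivalence relation on an object $X$. If $R\cap S=\Delta_X$ (the discrete relation), then $[R,S]=0$.
   Context: A split epimorphism is a pair $(f,s)$ with $fs=1$. A class $\Sigma$ of split epimorphisms is fibrational if it contains all split epimorphisms $(f,s)$ with $f$ invertible and is stable under pullback along any morphism. A pair of morphisms with common codomain $Z$ is jointly extremally epic if it factors jointly through no non-invertible monomorphism into $Z$. $\mathbb{E}$ is $\Sigma$-Mal'tsev if for every split epimorphism $(f,s)\colon X\rightleftarrows Y$ in $\Sigma$ and every split epimorphism $(g,t)$ with $g\colon Y'\to Y$, letting $X'=Y'\times_YX$, $s'=(1_{Y'},sg)$, $\bar t=(tf,1_X)$, the pair $(s',\bar t)$ is jointly extremally epic. A $\Sigma$-relation is a reflexive relation $(d_0,d_1)\colon S\rightarrowtail X\times X$ with reflexivity $s_0$ such that $(d_0,s_0)\in\Sigma$; a $\Sigma$-equivalence relation is an equivalence relation which is a $\Sigma$-relation. For reflexive relations $R$ and $S$ on $X$, let $R\times_XS$ be the pullback of $d_0^S$ along $d_1^R$ (elements $xRySz$), $\sigma_0^R=(1_R,s_0^Sd_1^R)\colon R\to R\times_XS$ ($xRy\mapsto xRySy$) and $\sigma_0^S=(s_0^Rd_0^S,1_S)\colon S\to R\times_XS$ ($ySz\mapsto yRySz$). We write $[R,S]=0$ ($R$ and $S$ centralize each other)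 when there is a morphism $p\colon R\times_XS\to X$ (a connector) with $p\sigma_0^R=d_0^R$ and $p\sigma_0^S=d_1^S$, i.e. $p(xRySy)=x$ and $p(yRySz)=z$. *)

(* Defs.v *)
Record Cat : Type := {
  ob :> Type;
  hom : ob -> ob -> Type;
  idm : forall a, hom a a;
  comp : forall a b c0, hom b c0 -> hom a b -> hom a c0;
  comp_id_l : forall a b (f : hom a b), comp a b b (idm b) f = f;
  comp_id_r : forall a b (f : hom a b), comp a a b f (idm a) = f;
  comp_assoc : forall a b c d (h : hom c d) (g : hom b c) (f : hom a b),
      comp a c d h (comp a b c g f) = comp a b d (comp b c d h g) f
}.

Arguments hom {_} _ _.
Arguments idm {_} _.
Arguments comp {_ _ _ _} _ _.

Notation "g \o f" := (comp g f) (at level 40, left associativity).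

Section Defs.
Context {C : Cat}.

Definition is_iso {A B : C} (f : hom A B) : Prop :=
  exists g : hom B A, g \o f = idm A /\ f \o g = idm B.

Definition is_mono {A B : C} (m : hom A B) : Prop :=
  forall Z (a b : hom Z A), m \o a = m \o b -> a = b.

Definition is_terminal (T : C) : Prop :=
  forall A : C, (exists u : hom A T, True) /\ (forall u v : hom A T, u = v).

Definition is_pullback {A B D P : C} (f : hom A D) (g : hom B D)
  (p1 : hom P A) (p2 : hom P B) : Prop :=
  f \o p1 = g \o p2 /\
  forall Q (q1 : hom Q A) (q2 : hom Q B), f \o q1 = g \o q2 ->
    exists u : hom Q P, (p1 \o u = q1 /\ p2 \o u = q2) /\
      forall v : hom Q P, p1 \o v = q1 -> p2 \o v = q2 -> v = u.

Definition finitely_complete : Prop :=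
  (exists T : C, is_terminal T) /\
  forall (A B D : C) (f : hom A D) (g : hom B D),
    exists (P : C) (p1 : hom P A) (p2 : hom P B), is_pullback f g p1 p2.

Definition SEClass := forall X Y : C, hom X Y -> hom Y X -> Prop.

Definition is_class_of_split_epis (Sigma : SEClass) : Prop :=
  forall X Y (f : hom X Y) (s : hom Y X), Sigma X Y f s -> f \o s = idm Y.

Definition fibrational (Sigma : SEClass) : Prop :=
  is_class_of_split_epis Sigma /\
  (forall X Y (f : hom X Y) (s : hom Y X),
      f \o s = idm Y -> is_iso f -> Sigma X Y f s) /\
  (forall X Y (f : hom X Y) (s : hom Y X), Sigma X Y f s ->
   forall Y' (g : hom Y' Y) X' (f' : hom X' Y') (g' : hom X' X),
     is_pullback g f f' g' ->
     forall s' : hom Y' X', f' \o s' = idm Y' -> g' \o s' = s \o g ->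
       Sigma X' Y' f' s').

Definition jointly_extremally_epic {A B Z : C} (a : hom A Z) (b : hom B Z)
  : Prop :=
  forall M (m : hom M Z) (a' : hom A M) (b' : hom B M),
    is_mono m -> m \o a' = a -> m \o b' = b -> is_iso m.

(* Sigma-Mal'tsev: X' = Y' x_Y X with projections p1 : X' -> Y',
   p2 : X' -> X; s' = (1, s g), tbar = (t f, 1). *)
Definition Sigma_Maltsev (Sigma : SEClass) : Prop :=
  forall X Y (f : hom X Y) (s : hom Y X), Sigma X Y f s ->
  forall Y' (g : hom Y' Y) (t : hom Y Y'), g \o t = idm Y ->
  forall X' (p1 : hom X' Y') (p2 : hom X' X), is_pullback g f p1 p2 ->
  forall (s' : hom Y' X') (tb : hom X X'),
    p1 \o s' = idm Y' -> p2 \o s' = s \o g ->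
    p1 \o tb = t \o f -> p2 \o tb = idm X ->
    jointly_extremally_epic s' tb.

(* A relation (d0,d1) : S >-> X x X, i.e. a jointly monic pair *)
Definition jointly_monic {S X : C} (d0 d1 : hom S X) : Prop :=
  forall Z (a b : hom Z S), d0 \o a = d0 \o b -> d1 \o a = d1 \o b -> a = b.

Definition reflexive_relation {S X : C} (d0 d1 : hom S X) (s0 : hom X S)
  : Prop :=
  jointly_monic d0 d1 /\ d0 \o s0 = idm X /\ d1 \o s0 = idm X.

Definition equivalence_relation {S X : C} (d0 d1 : hom S X) (s0 : hom X S)
  : Prop :=
  reflexive_relation d0 d1 s0 /\
  (exists sg : hom S S, d0 \o sg = d1 /\ d1 \o sg = d0) /\
  (forall P (q1 q2 : hom P S), is_pullback d1 d0 q1 q2 ->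
     exists tau : hom P S, d0 \o tau = d0 \o q1 /\ d1 \o tau = d1 \o q2).

Definition Sigma_equivalence_relation (Sigma : SEClass) {S X : C}
  (d0 d1 : hom S X) (s0 : hom X S) : Prop :=
  equivalence_relation d0 d1 s0 /\ Sigma S X d0 s0.

(* (I, i1, i2) is the intersection R /\ S of relations (dR0,dR1), (dS0,dS1)
   on X, i.e. the pullback of the two monos into X x X *)
Definition is_intersection {R S X I : C} (dR0 dR1 : hom R X)
  (dS0 dS1 : hom S X) (i1 : hom I R) (i2 : hom I S) : Prop :=
  dR0 \o i1 = dS0 \o i2 /\ dR1 \o i1 = dS1 \o i2 /\
  forall Q (q1 : hom Q R) (q2 : hom Q S),
    dR0 \o q1 = dS0 \o q2 -> dR1 \o q1 = dS1 \o q2 ->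
    exists u : hom Q I, (i1 \o u = q1 /\ i2 \o u = q2) /\
      forall v : hom Q I, i1 \o v = q1 -> i2 \o v = q2 -> v = u.

(* R /\ S = Delta_X as subobjects of X x X: the intersection, as the
   relation (dR0 i1, dR1 i1) on X, is isomorphic to (1_X, 1_X) *)
Definition intersection_is_discrete {R S X : C} (dR0 dR1 : hom R X)
  (dS0 dS1 : hom S X) : Prop :=
  forall I (i1 : hom I R) (i2 : hom I S),
    is_intersection dR0 dR1 dS0 dS1 i1 i2 ->
    exists phi : hom I X, is_iso phi /\ dR0 \o i1 = phi /\ dR1 \o i1 = phi.

(* [R,S] = 0: for R x_X S (pullback of d0^S along d1^R) with the maps
   sigma_0^R, sigma_0^S, there is a connector p *)
Definition centralize {R S X : C} (dR0 dR1 : hom R X) (sR0 : hom X R)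
  (dS0 dS1 : hom S X) (sS0 : hom X S) : Prop :=
  forall P (pi1 : hom P R) (pi2 : hom P S), is_pullback dR1 dS0 pi1 pi2 ->
  forall (sigR : hom R P) (sigS : hom S P),
    pi1 \o sigR = idm R -> pi2 \o sigR = sS0 \o dR1 ->
    pi1 \o sigS = sR0 \o dS0 -> pi2 \o sigS = idm S ->
    exists p : hom P X, p \o sigR = dR0 /\ p \o sigS = dS1.

End Defs.

(* Main.v *)
Require Import Defs.

Lemma assoc {C : Cat} {a b c d : C} (h : hom c d) (g : hom b c) (f : hom a b) :
  h \o (g \o f) = (h \o g) \o f.
Proof. apply comp_assoc. Qed.

Lemma idl {C : Cat} {a b : C} (f : hom a b) : idm b \o f = f.
Proof. apply comp_id_l. Qed.
Lemma idr {C : Cat} {a b : C} (f : hom a b) : f \o idm a = f.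
Proof. apply comp_id_r. Qed.

Lemma post {C : Cat} {a b c d : C} (x : hom b c) (y : hom a b) (w : hom a c)
  (z : hom d a) : x \o y = w -> x \o (y \o z) = w \o z.
Proof. intros H; rewrite assoc, H; reflexivity. Qed.

Lemma post2 {C : Cat} {a b b' c d : C} (x : hom b c) (y : hom a b) (u : hom b' c)
  (v : hom a b') (z : hom d a) : x \o y = u \o v -> x \o (y \o z) = u \o (v \o z).
Proof. intros H; rewrite !assoc, H; reflexivity. Qed.

Lemma prod_exists (C : Cat) (HC : @finitely_complete C) (X : C) :
  exists XX (pr1 pr2 : hom XX X),
    (forall Q (f g : hom Q X), exists h, pr1 \o h = f /\ pr2 \o h = g) /\
    (forall Q (h h' : hom Q XX), pr1 \o h = pr1 \o h' -> pr2 \o h = pr2 \o h' -> h = h').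
Proof.
  destruct HC as [[T HT] HP].
  destruct (HT X) as [[bang _] _].
  destruct (HP X X T bang bang) as [XX [p1 [p2 [Hc Hu]]]].
  exists XX, p1, p2. split.
  - intros Q f g. destruct (Hu Q f g) as [u [[H1 H2] _]].
    + apply (proj2 (HT Q)).
    + exists u; auto.
  - intros Q h h' E1 E2.
    destruct (Hu Q (p1 \o h) (p2 \o h)) as [u [_ Hun]].
    + apply (proj2 (HT Q)).
    + rewrite (Hun h) by reflexivity. rewrite (Hun h') by auto. reflexivity.
Qed.

Theorem proposition3p6 (C : Cat) (Sigma : @SEClass C)
  (HC : @finitely_complete C) (HSig : fibrational Sigma)
  (HM : Sigma_Maltsev Sigma)
  (X R S : C) (dR0 dR1 : hom R X) (sR0 : hom X R)
  (dS0 dS1 : hom S X) (sS0 : hom X S)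
  (HR : equivalence_relation dR0 dR1 sR0)
  (HS : Sigma_equivalence_relation Sigma dS0 dS1 sS0)
  (Hdisc : intersection_is_discrete dR0 dR1 dS0 dS1) :
  centralize dR0 dR1 sR0 dS0 dS1 sS0.
Proof.
  destruct (prod_exists C HC X) as [XX [pr1 [pr2 [Hpair Hpu]]]].
  destruct HR as [[HRm [HR0 HR1]] [[sgR [HsgR0 HsgR1]] HRt]].
  destruct HS as [[[HSm [HS0 HS1]] [[sgS [HsgS0 HsgS1]] HSt]] HSig0].
  pose proof (proj2 HC) as HPB.
  destruct (Hpair R dR0 dR1) as [pR [HpR0 HpR1]].
  destruct (Hpair S dS0 dS1) as [pS [HpS0 HpS1]].
  destruct (HPB _ _ _ pR pS) as [I [i1 [i2 [HIc HIu]]]].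
  assert (HI : is_intersection dR0 dR1 dS0 dS1 i1 i2).
  { split; [|split].
    - rewrite <- HpR0, <- HpS0, <- !assoc, HIc; reflexivity.
    - rewrite <- HpR1, <- HpS1, <- !assoc, HIc; reflexivity.
    - intros Q q1 q2 E0 E1. apply HIu.
      apply Hpu; rewrite !assoc; [rewrite HpR0, HpS0 | rewrite HpR1, HpS1]; auto. }
  destruct (Hdisc I i1 i2 HI) as [phi [_ [Hphi0 Hphi1]]].
  assert (Key : forall Z (s1 s2 : hom Z S) (r1 r2 : hom Z R),
     dS1 \o s1 = dR0 \o r1 -> dS1 \o s2 = dR0 \o r2 ->
     dS0 \o s1 = dS0 \o s2 -> dR1 \o r1 = dR1 \o r2 -> s1 = s2 /\ r1 = r2).
  { intros Z s1 s2 r1 r2 E1 E2 E3 E4.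
    destruct (HPB _ _ _ dS1 dS0) as [PS [a1 [a2 HPS]]].
    destruct (HSt PS a1 a2 HPS) as [tS [HtS0 HtS1]].
    destruct (proj2 HPS Z (sgS \o s1) s2) as [uS [[HuS1 HuS2] _]].
    { rewrite assoc, HsgS1; auto. }
    destruct (HPB _ _ _ dR1 dR0) as [PR [b1 [b2 HPR]]].
    destruct (HRt PR b1 b2 HPR) as [tR [HtR0 HtR1]].
    destruct (proj2 HPR Z r1 (sgR \o r2)) as [uR [[HuR1 HuR2] _]].
    { rewrite assoc, HsgR0; auto. }
    destruct (proj2 (proj2 HI) Z (tR \o uR) (tS \o uS)) as [v [[Hv1 Hv2] _]].
    { rewrite !assoc, HtR0, HtS0, <- !assoc, HuR1, HuS1, assoc, HsgS0; auto. }
    { rewrite !assoc, HtR1, HtS1, <- !assoc, HuR2, HuS2, assoc, HsgR1; auto. }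
    assert (W : dS1 \o s1 = dS1 \o s2).
    { transitivity (dR0 \o (tR \o uR)).
      - rewrite assoc, HtR0, <- assoc, HuR1; auto.
      - rewrite <- Hv1, assoc, Hphi0, <- Hphi1, <- assoc, Hv1, assoc, HtR1,
          <- assoc, HuR2, assoc, HsgR1; auto. }
    split.
    - apply HSm; auto.
    - apply HRm; auto. rewrite <- E1, <- E2; auto. }
  intros P pi1 pi2 HP sigR sigS Hr1 Hr2 Hs1 Hs2.
  destruct (HPB _ _ _ dS1 dR0) as [Q0 [q1 [q2 [HQc HQu]]]].
  destruct (Hpair P (dR0 \o pi1) (dS1 \o pi2)) as [al [Hal1 Hal2]].
  destruct (Hpair Q0 (dS0 \o q1) (dR1 \o q2)) as [be [Hbe1 Hbe2]].
  destruct (HPB _ _ _ al be) as [M [m [n [HMc HMu]]]].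
  assert (Hm : is_mono m).
  { intros Z a b E.
    assert (Eab : be \o (n \o a) = be \o (n \o b)).
    { rewrite !assoc, <- HMc, <- !assoc, E; reflexivity. }
    assert (F1 : dS0 \o (q1 \o (n \o a)) = dS0 \o (q1 \o (n \o b))).
    { rewrite !assoc, <- Hbe1, <- !assoc, Eab; reflexivity. }
    assert (F2 : dR1 \o (q2 \o (n \o a)) = dR1 \o (q2 \o (n \o b))).
    { rewrite !assoc, <- Hbe2, <- !assoc, Eab; reflexivity. }
    destruct (Key Z _ _ _ _ (post2 _ _ _ _ _ HQc) (post2 _ _ _ _ _ HQc) F1 F2) as [G1 G2].
    assert (Nab : n \o a = n \o b).
    { destruct (HQu Z (q1 \o (n \o a)) (q2 \o (n \o a))) as [u [_ Hu]].
      - apply post2; auto.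
      - rewrite (Hu (n \o a)) by auto. rewrite (Hu (n \o b)) by auto. auto. }
    destruct (HMu Z (m \o a) (n \o a)) as [u [_ Hu]].
    - apply post2; auto.
    - rewrite (Hu a) by auto. rewrite (Hu b) by auto. auto. }
  destruct (HQu R (sS0 \o dR0) (idm R)) as [c [[Hc1 Hc2] _]].
  { rewrite assoc, HS1, idl, idr; auto. }
  destruct (HMu R sigR c) as [bR [[HbR1 HbR2] _]].
  { apply Hpu.
    - rewrite !assoc, Hal1, Hbe1, <- !assoc, Hr1, Hc1, idr, assoc, HS0, idl; auto.
    - rewrite !assoc, Hal2, Hbe2, <- !assoc, Hr2, Hc2, idr, assoc, HS1, idl; auto. }
  destruct (HQu S (idm S) (sR0 \o dS1)) as [c' [[Hc1' Hc2'] _]].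
  { rewrite idr, assoc, HR0, idl; auto. }
  destruct (HMu S sigS c') as [bS [[HbS1 HbS2] _]].
  { apply Hpu.
    - rewrite !assoc, Hal1, Hbe1, <- !assoc, Hs1, Hc1', idr, assoc, HR0, idl; auto.
    - rewrite !assoc, Hal2, Hbe2, <- !assoc, Hs2, Hc2', idr, assoc, HR1, idl; auto. }
  pose proof (HM S X dS0 sS0 HSig0 R dR1 sR0 HR1 P pi1 pi2 HP sigR sigS Hr1 Hr2 Hs1 Hs2
     M m bR bS Hm HbR1 HbS1) as [g [Hg1 Hg2]].
  exists (dR0 \o (q2 \o (n \o g))). split.
  - assert (Hgr : g \o sigR = bR) by (rewrite <- HbR1, assoc, Hg1, idl; auto).
    rewrite <- !assoc, Hgr, HbR2, Hc2, idr; auto.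
  - assert (Hgs : g \o sigS = bS) by (rewrite <- HbS1, assoc, Hg1, idl; auto).
    rewrite <- !assoc, Hgs, HbS2, Hc2', assoc, HR0, idl; auto.
Qed.
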